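(* Under the standing assumptions below, let $\gamma>0$ be arbitrary (such that the $g$-proximal subproblems have minimizers) and let $\{(y^t,z^t,x^t)\}$ be generated by the PR splitting iteration. Then for every $t\ge 1$, \[ \mathcal{P}_\gamma(y^{t+1},z^{t+1},x^{t+1})-\mathcal{P}_\gamma(y^t,z^t,x^t)\le \frac12\left(-3\sigma+2L+\gamma L^2\right)\|y^{t+1}-y^t\|^2, \] and moreover $2\|y^t-z^t\|=\|x^t-x^{t-1}\|\le(1+\gamma L)\|y^{t+1}-y^t\|$.
   Context: Standing assumptions: $f:\mathbb{R}^n\to\mathbb{R}$ is differentiable and strongly convex with modulus at least $\sigma>0$ (i.e. $f-\frac{\sigma}{2}\|\cdot\|^2$ is convex), and $\nabla f$ is Lipschitz continuous with modulus at most $L>0$. The function $g:\mathbb{R}^n\to(-\infty,\infty]$ is proper and lower semicontinuous, and for the $\gamma>0$ used, the set $\operatorname{Argmin}_u\{\gamma g(u)+\frac12\|u-w\|^2\}$ is nonempty for every $w\in\mathbb{R}^n$. PR splitting iteration: given $x^0$ and $\gamma>0$, for $t=0,1,2,\dots$: $y^{t+1}=\operatorname{argmin}_y\{f(y)+\frac{1}{2\gamma}\|y-x^t\|^2\}$; $z^{t+1}\in\operatorname{Argmin}_z\{g(z)+\frac{1}{2\gamma}\|2y^{t+1}-x^t-z\|^2\}$ (any choice); $x^{t+1}=x^t+2(z^{t+1}-y^{t+1})$. Merit function: $\mathcal{P}_\gamma(y,z,x):=f(y)+g(z)-\frac{3}{2\gamma}\|y-z\|^2+\frac{1}{\gamma}\langle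 x-y,z-y\rangle$. *)

(* Defs.v *)
From mathcomp Require Import ssreflect ssrfun ssrbool eqtype ssrnat seq fintype bigop.
From Stdlib Require Import Reals.
Open Scope R_scope.

Definition vec (n : nat) := 'I_n -> R.

Definition vadd {n} (x y : vec n) : vec n := fun i => x i + y i.
Definition vsub {n} (x y : vec n) : vec n := fun i => x i - y i.
Definition vscale {n} (a : R) (x : vec n) : vec n := fun i => a * x i.

Definition inner {n} (x y : vec n) : R := \big[Rplus/0]_(i < n) (x i * y i).
Definition vnorm {n} (x : vec n) : R := sqrt (inner x x).

Definition convex_fun {n} (h : vec n -> R) : Prop :=
  forall (x y : vec n) (lam : R), 0 <= lam <= 1 ->
    h (vadd (vscale lam x) (vscale (1 - lam) y)) <= lam * h x + (1 - lam) * h y.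

Definition strongly_convex {n} (f : vec n -> R) (sigma : R) : Prop :=
  convex_fun (fun x => f x - sigma / 2 * (vnorm x) ^ 2).

Definition is_gradient {n} (f : vec n -> R) (gradf : vec n -> vec n) : Prop :=
  forall x : vec n, forall eps : R, 0 < eps -> exists delta : R, 0 < delta /\
    forall h : vec n, 0 < vnorm h < delta ->
      Rabs (f (vadd x h) - f x - inner (gradf x) h) <= eps * vnorm h.

Definition lipschitz {n} (F : vec n -> vec n) (L : R) : Prop :=
  forall x y : vec n, vnorm (vsub (F x) (F y)) <= L * vnorm (vsub x y).

(* Extended reals (-oo, +oo]: [Some a] is the real a, [None] is +oo. *)
Definition ereal := option R.

Definition ele (a b : ereal) : Prop :=
  match a, b with
  | _, None => True
  | None, Some _ => False
  | Some a, Some b => a <= b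
  end.

Definition rlt_e (a : R) (b : ereal) : Prop :=
  match b with None => True | Some b => a < b end.

Definition eaffine (c : R) (b : ereal) (d : R) : ereal :=
  match b with None => None | Some b => Some (c * b + d) end.

Definition proper_fun {n} (g : vec n -> ereal) : Prop := exists x, g x <> None.

Definition lsc {n} (g : vec n -> ereal) : Prop :=
  forall (x : vec n) (a : R), rlt_e a (g x) ->
    exists delta, 0 < delta /\
      forall y : vec n, vnorm (vsub y x) < delta -> rlt_e a (g y).

Definition in_prox_argmin {n} (g : vec n -> ereal) (gamma : R) (w u : vec n) : Prop :=
  forall v : vec n,
    ele (eaffine gamma (g u) (1 / 2 * (vnorm (vsub u w)) ^ 2))
        (eaffine gamma (g v) (1 / 2 * (vnorm (vsub v w)) ^ 2)).

Definition PR_iter {n} (f : vec n -> R) (g : vec n -> ereal) (gamma : R)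
    (y z x : nat -> vec n) : Prop :=
  forall t : nat,
    (forall v : vec n,
       f (y (S t)) + 1 / (2 * gamma) * (vnorm (vsub (y (S t)) (x t))) ^ 2
       <= f v + 1 / (2 * gamma) * (vnorm (vsub v (x t))) ^ 2) /\
    (forall v : vec n,
       ele (eaffine 1 (g (z (S t)))
              (1 / (2 * gamma) * (vnorm (vsub (vsub (vscale 2 (y (S t))) (x t)) (z (S t)))) ^ 2))
           (eaffine 1 (g v)
              (1 / (2 * gamma) * (vnorm (vsub (vsub (vscale 2 (y (S t))) (x t)) v)) ^ 2))) /\
    x (S t) = vadd (x t) (vscale 2 (vsub (z (S t)) (y (S t)))).

Definition merit {n} (f : vec n -> R) (g : vec n -> ereal) (gamma : R)
    (y z x : vec n) : ereal :=
  eaffine 1 (g z)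
    (f y - 3 / (2 * gamma) * (vnorm (vsub y z)) ^ 2
         + 1 / gamma * inner (vsub x y) (vsub z y)).

(* Main.v *)
Require Import Defs.
From HB Require Import structures.
From mathcomp Require Import ssreflect ssrfun ssrbool eqtype ssrnat seq fintype bigop.
From Stdlib Require Import Reals Lra Psatz FunctionalExtensionality.
Open Scope R_scope.

HB.instance Definition _ := Monoid.isComLaw.Build R 0 Rplus (fun a b c => esym (Rplus_assoc a b c)) Rplus_comm Rplus_0_l.

Section V.
Context {n : nat}.
Implicit Types u v w : vec n.

Lemma inner_addl u v w : inner (vadd u v) w = inner u w + inner v w.
Proof. rewrite /inner -big_split; apply: eq_bigr => i _; rewrite /vadd /=; ring. Qed.
Lemma inner_subl u v w : inner (vsub u v) w = inner u w - inner v w.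
Proof.
rewrite /inner.
have -> : \big[Rplus/0]_(i < n) (v i * w i) = - \big[Rplus/0]_(i < n) (- (v i * w i)).
  apply: (big_rec2 (fun a b => a = - b)) => [|i a b _ ->]; ring.
rewrite /Rminus Ropp_involutive -big_split; apply: eq_bigr => i _; rewrite /vsub /=; ring.
Qed.
Lemma inner_scalel a u w : inner (vscale a u) w = a * inner u w.
Proof.
rewrite /inner; apply: (big_rec2 (fun s1 s2 => s1 = a * s2)) => [|i s1 s2 _ ->]; rewrite /vscale; ring.
Qed.
Lemma inner_comm u v : inner u v = inner v u.
Proof. rewrite /inner; apply: eq_bigr => i _; ring. Qed.
Lemma inner_addr u v w : inner w (vadd u v) = inner w u + inner w v.
Proof. by rewrite inner_comm inner_addl !(inner_comm w). Qed.
Lemma inner_subr u v w : inner w (vsub u v) = inner w u - inner w v.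
Proof. by rewrite inner_comm inner_subl !(inner_comm w). Qed.
Lemma inner_scaler a u w : inner w (vscale a u) = a * inner w u.
Proof. by rewrite inner_comm inner_scalel (inner_comm w). Qed.
Lemma inner_ge0 u : 0 <= inner u u.
Proof. rewrite /inner; apply: (big_rec (fun s => 0 <= s)) => [|i s _ H]; nra. Qed.
Lemma inner_ge_comp u i : u i * u i <= inner u u.
Proof.
rewrite /inner (bigD1 i) //=.
have : 0 <= \big[Rplus/0]_(j < n | j != i) (u j * u j).
  apply: (big_rec (fun s => 0 <= s)) => [|j s _ H]; nra.
move=> H /=. rewrite -[X in X <= _]Rplus_0_r; apply: Rplus_le_compat_l; exact: H.
Qed.
Lemma inner0_comp u : inner u u = 0 -> forall i, u i = 0.
Proof. move=> H i; have := inner_ge_comp u i; nra. Qed.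
Lemma vnorm_sq u : vnorm u ^ 2 = inner u u.
Proof. by rewrite /vnorm pow2_sqrt //; apply: inner_ge0. Qed.
Lemma vnorm_ge0 u : 0 <= vnorm u.
Proof. apply: sqrt_pos. Qed.
Lemma vnorm_scale a u : vnorm (vscale a u) = Rabs a * vnorm u.
Proof.
rewrite /vnorm inner_scalel inner_scaler -Rmult_assoc sqrt_mult.
- by rewrite -sqrt_Rsqr_abs.
- nra.
- apply: inner_ge0.
Qed.
End V.


Section V2.
Context {n : nat}.
Implicit Types u v w : vec n.

Lemma vnorm_scale_pos a u : 0 <= a -> vnorm (vscale a u) = a * vnorm u.
Proof. move=> a0; rewrite vnorm_scale Rabs_pos_eq //. Qed.

Lemma inner_norm_add u v : inner (vadd u v) (vadd u v) = inner u u + 2 * inner u v + inner v v.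
Proof. rewrite !inner_addl !inner_addr (inner_comm v u); ring. Qed.

Lemma prox_opt (f : vec n -> R) gradf c xx yy : is_gradient f gradf -> 0 < c ->
 (forall v, f yy + c * vnorm (vsub yy xx) ^ 2 <= f v + c * vnorm (vsub v xx) ^ 2) ->
 forall i, gradf yy i + 2 * c * (yy i - xx i) = 0.
Proof.
move=> Hg c0 Hmin.
set G := vadd (gradf yy) (vscale (2 * c) (vsub yy xx)).
suff: inner G G = 0 by move/inner0_comp => H i; have := H i; rewrite /G /vadd /vscale /vsub.
have q0 := inner_ge0 G. set q := inner G G.
case: (Rle_lt_or_eq_dec _ _ q0) => [qp|]; last by move=> H0; rewrite /q -H0. exfalso.
have {}qp : 0 < q by exact: qp.
set h := vscale (-1) G.
have hh : inner h h = q by rewrite /h inner_scalel inner_scaler /q; ring.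
have Gh : inner (gradf yy) h + 2 * c * inner (vsub yy xx) h = - q.
  have : inner G h = - q by rewrite /h inner_scaler /q; ring.
  by rewrite {1}/G inner_addl inner_scalel.
clearbody h q G.
set s := vnorm h.
have hs : s ^ 2 = q by rewrite /s vnorm_sq.
have s0 : 0 <= s by apply: vnorm_ge0.
have sp : 0 < s.
  case: (Rle_lt_or_eq_dec _ _ s0) => // E; rewrite -E in hs; lra.
have [d [d0 Hd]] := Hg yy (s / 4) ltac:(lra).
set lam := Rmin (d / (2 * s)) (1 / (4 * c)).
have l1 : lam <= d / (2 * s) by apply: Rmin_l.
have l2 : lam <= 1 / (4 * c) by apply: Rmin_r.
have lp : 0 < lam.
  apply: Rmin_glb_lt; apply: Rdiv_lt_0_compat; lra.
have Hn : vnorm (vscale lam h) = lam * s by rewrite vnorm_scale_pos //; lra.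
have ls : lam * s <= d / 2.
  have -> : d / 2 = d / (2 * s) * s by field; lra.
  nra.
have cl : c * lam <= 1 / 4.
  have -> : 1 / 4 = c * (1 / (4 * c)) by field; lra.
  nra.
have := Hd (vscale lam h); rewrite Hn => /(_ ltac:(nra)) Ha.
have := Hmin (vadd yy (vscale lam h)).
have -> : vsub (vadd yy (vscale lam h)) xx = vadd (vsub yy xx) (vscale lam h).
  by apply: functional_extensionality => i; rewrite /vsub /vadd /vscale; ring.
rewrite !vnorm_sq inner_norm_add !inner_scaler inner_scalel hh.
move: Ha; rewrite inner_scaler => Ha.
have Ha2 := Rle_trans _ _ _ (Rle_abs _) Ha.
have : lam * (c * lam * q) <= lam * (q / 4) by apply: Rmult_le_compat_l; nra.
nra.
Qed.
End V2.


Lemma sc_ineq {n} (f : vec n -> R) gradf sigma u v : is_gradient f gradf ->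
  strongly_convex f sigma -> 0 < sigma ->
  f v + inner (gradf v) (vsub u v) + sigma / 2 * vnorm (vsub u v) ^ 2 <= f u.
Proof.
move=> Hg Hsc sp.
set d := vsub u v.
have hu : u = vadd v d by apply: functional_extensionality => i; rewrite /d /vadd /vsub; ring.
clearbody d; subst u.
rewrite vnorm_sq.
have q0 := inner_ge0 d.
case: (Rle_lt_or_eq_dec _ _ q0) => [qp|q00]; last first.
  have d0 : d = vscale 0 d.
    apply: functional_extensionality => i; rewrite /vscale (inner0_comp d (esym q00) i); ring.
  rewrite -q00 d0 inner_scaler.
  have -> : vadd v (vscale 0 d) = v by apply: functional_extensionality => i; rewrite /vadd /vscale; ring.
  lra.
set q := inner d d in qp *.
apply: Rnot_lt_le => Hr.
set r := f v + inner (gradf v) d + sigma / 2 * q - f (vadd v d).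
have rp : 0 < r by rewrite /r; lra.
set s := vnorm d.
have hs : s ^ 2 = q by rewrite /s vnorm_sq.
have s0 : 0 <= s by apply: vnorm_ge0.
have sp' : 0 < s.
  case: (Rle_lt_or_eq_dec _ _ s0) => // E; rewrite -E in hs; lra.
have [del [del0 Hd]] := Hg v (r / (4 * s)) ltac:(apply: Rdiv_lt_0_compat; lra).
set lam := Rmin (1 / 2) (Rmin (del / (2 * s)) (r / (2 * sigma * q))).
have l1 : lam <= 1 / 2 by apply: Rmin_l.
have l2 : lam <= del / (2 * s) by apply: Rle_trans (Rmin_r _ _) (Rmin_l _ _).
have l3 : lam <= r / (2 * sigma * q) by apply: Rle_trans (Rmin_r _ _) (Rmin_r _ _).
have lp : 0 < lam.
  apply: Rmin_glb_lt; first lra.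
  apply: Rmin_glb_lt; apply: Rdiv_lt_0_compat; nra.
have Hn : vnorm (vscale lam d) = lam * s by rewrite vnorm_scale_pos //; lra.
have ls : lam * s <= del / 2.
  have -> : del / 2 = del / (2 * s) * s by field; lra.
  nra.
have sl : sigma * lam * q <= r / 2.
  have -> : r / 2 = sigma * q * (r / (2 * sigma * q)) by field; lra.
  have : 0 < sigma * q by nra.
  nra.
have := Hd (vscale lam d); rewrite Hn => /(_ ltac:(nra)) Ha.
have Ha2 := Rle_trans _ _ _ (Rle_abs _) Ha.
have Ha3 := Rle_trans _ _ _ (Rle_abs _) (Rle_trans _ _ _ (Req_le _ _ (Rabs_Ropp _)) Ha).
move: Ha2 Ha3; rewrite inner_scaler => Ha2 Ha3.
have := Hsc (vadd v d) v lam ltac:(lra).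
have -> : vadd (vscale lam (vadd v d)) (vscale (1 - lam) v) = vadd v (vscale lam d).
  by apply: functional_extensionality => i; rewrite /vadd /vscale; ring.
rewrite !vnorm_sq !inner_norm_add !inner_scaler !inner_scalel.
have E : r / (4 * s) * (lam * s) = lam * r / 4 by field; lra.
rewrite E in Ha2 Ha3.
move=> Hc; rewrite -/q in Hc.
have : lam * (r / 2) <= lam * (r - r / 4 - sigma / 2 * lam * q).
  apply: Rmult_le_compat_l; lra.
move=> Hx. clearbody q. rewrite /r in Ha2 Ha3 Hx. nra.
Qed.


Lemma inner_sub_scale {n} (u v : vec n) L : inner (vsub u (vscale L v)) (vsub u (vscale L v)) = inner u u - 2 * L * inner u v + L ^ 2 * inner v v.
Proof. rewrite inner_subl !inner_subr !inner_scalel !inner_scaler (inner_comm v u); ring. Qed.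

Lemma vsub_eq {n} (u v : vec n) : vsub u v = vadd u (vscale (-1) v).
Proof. apply: functional_extensionality => i; rewrite /vsub /vadd /vscale; ring. Qed.

Lemma vnorm_subC {n} (u v : vec n) : vnorm (vsub u v) = vnorm (vsub v u).
Proof.
have -> : vsub u v = vscale (-1) (vsub v u) by apply: functional_extensionality => i; rewrite /vsub /vscale; ring.
rewrite vnorm_scale Rabs_Ropp Rabs_R1; ring.
Qed.

Lemma gfin {n} (g : vec n -> ereal) (gamma : R) (yy xx zz : vec n) :
  proper_fun g ->
  (forall v : vec n,
       ele (eaffine 1 (g zz)
              (1 / (2 * gamma) * (vnorm (vsub (vsub (vscale 2 yy) xx) zz)) ^ 2))
           (eaffine 1 (g v)
              (1 / (2 * gamma) * (vnorm (vsub (vsub (vscale 2 yy) xx) v)) ^ 2))) ->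
  exists a, g zz = Some a.
Proof.
move=> [w Hw] H; have := H w.
case: (g zz) => [a|]; first by eauto.
by case: (g w) Hw.
Qed.

Theorem mainTheorem2 (n : nat) (f : vec n -> R) (gradf : vec n -> vec n)
    (g : vec n -> ereal) (sigma L gamma : R)
    (Hsigma : 0 < sigma) (HL : 0 < L) (Hgamma : 0 < gamma)
    (Hgrad : is_gradient f gradf)
    (Hsc : strongly_convex f sigma)
    (Hlip : lipschitz gradf L)
    (Hproper : proper_fun g) (Hlsc : lsc g)
    (Hprox : forall w : vec n, exists u : vec n, in_prox_argmin g gamma w u)
    (y z x : nat -> vec n)
    (Hiter : PR_iter f g gamma y z x) :
  forall t : nat, (1 <= t)%nat ->
    (exists p1 p0 : R,
       merit f g gamma (y (S t)) (z (S t)) (x (S t)) = Some p1 /\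
       merit f g gamma (y t) (z t) (x t) = Some p0 /\
       p1 - p0 <= 1 / 2 * (- 3 * sigma + 2 * L + gamma * L ^ 2)
                  * (vnorm (vsub (y (S t)) (y t))) ^ 2) /\
    2 * vnorm (vsub (y t) (z t)) = vnorm (vsub (x t) (x (Nat.pred t))) /\
    vnorm (vsub (x t) (x (Nat.pred t))) <= (1 + gamma * L) * vnorm (vsub (y (S t)) (y t)).
Proof.
case=> [|t] // _.
rewrite [Nat.pred _]/=.
have [HyA [HzA HxA]] := Hiter (S t).
have [HyB [HzB HxB]] := Hiter t.
have c0 : 0 < 1 / (2 * gamma) by apply: Rdiv_lt_0_compat; lra.
have PA := prox_opt _ _ _ _ _ Hgrad c0 HyA.
have PB := prox_opt _ _ _ _ _ Hgrad c0 HyB.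
have hG1 : gradf (y (S (S t))) = vscale (1 / gamma) (vsub (x (S t)) (y (S (S t)))).
  apply: functional_extensionality => i; have := PA i; rewrite /vscale /vsub => E.
  apply: (Rmult_eq_reg_l gamma); last lra.
  have -> : gamma * (1 / gamma * (x (S t) i - y (S (S t)) i)) = x (S t) i - y (S (S t)) i by field; lra.
  have -> : x (S t) i - y (S (S t)) i = gamma * (gradf (y (S (S t))) i + 2 * (1 / (2 * gamma)) * (y (S (S t)) i - x (S t) i)) * (-1) + gamma * gradf (y (S (S t))) i by field; lra.
  rewrite E; ring.
have hG0 : gradf (y (S t)) = vscale (1 / gamma) (vsub (vsub (x (S t)) (vscale 2 (vsub (z (S t)) (y (S t))))) (y (S t))).
  apply: functional_extensionality => i; have := PB i; have := f_equal (fun w => w i) HxB.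
  rewrite /vscale /vsub /vadd /= => E1 E.
  apply: (Rmult_eq_reg_l gamma); last lra.
  rewrite E1.
  have -> : gamma * (1 / gamma * (x t i + 2 * (z (S t) i - y (S t) i) - 2 * (z (S t) i - y (S t) i) - y (S t) i)) = x t i - y (S t) i by field; lra.
  have -> : x t i - y (S t) i = gamma * (gradf (y (S t)) i + 2 * (1 / (2 * gamma)) * (y (S t) i - x t i)) * (-1) + gamma * gradf (y (S t)) i by field; lra.
  rewrite E; ring.
have [g1 Hg1] := gfin _ _ _ _ _ Hproper HzA.
have [g0 Hg0] := gfin _ _ _ _ _ Hproper HzB.
have Zmin := HzA (z (S t)).
rewrite Hg1 Hg0 in Zmin; cbn [eaffine ele] in Zmin.
split.
  rewrite /merit Hg1 Hg0; cbn [eaffine].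
  eexists; eexists; split; first reflexivity; split; first reflexivity.
  apply: (Rle_trans _ ((1*g1 + 1/(2*gamma) * vnorm (vsub (vsub (vscale 2 (y (S (S t)))) (x (S t))) (z (S (S t))))^2 - (1*g0 + 1/(2*gamma) * vnorm (vsub (vsub (vscale 2 (y (S (S t)))) (x (S t))) (z (S t)))^2)) + (f (y (S (S t))) - f (y (S t)) - inner (gradf (y (S (S t)))) (vsub (y (S (S t))) (y (S t))) + gamma / 2 * vnorm (vsub (gradf (y (S (S t)))) (gradf (y (S t))))^2))).
    apply: Req_le.
    rewrite HxA hG1 hG0 !vnorm_sq.
    rewrite !vsub_eq.
    repeat rewrite ?inner_addl ?inner_addr ?inner_subl ?inner_subr ?inner_scalel ?inner_scaler.
    rewrite ?(inner_comm (y (S t)) (x (S t))) ?(inner_comm (y (S (S t))) (x (S t))) ?(inner_comm (z (S t)) (x (S t))) ?(inner_comm (z (S (S t))) (x (S t))) ?(inner_comm (y (S (S t))) (y (S t))) ?(inner_comm (z (S t)) (y (S t))) ?(inner_comm (z (S (S t))) (y (S t))) ?(inner_comm (z (S t)) (y (S (S t)))) ?(inner_comm (z (S (S t))) (y (S (S t)))) ?(inner_comm (z (S (S t))) (z (S t))).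
    field. apply: Rgt_not_eq; lra.
  have SC1 := sc_ineq _ _ _ (y (S t)) (y (S (S t))) Hgrad Hsc Hsigma.
  have SC2 := sc_ineq _ _ _ (y (S (S t))) (y (S t)) Hgrad Hsc Hsigma.
  have e1 : inner (gradf (y (S (S t)))) (vsub (y (S t)) (y (S (S t)))) = - inner (gradf (y (S (S t)))) (vsub (y (S (S t))) (y (S t))) by rewrite !inner_subr; ring.
  rewrite e1 vnorm_subC in SC1.
  have e3 : inner (vsub (gradf (y (S (S t)))) (gradf (y (S t)))) (vsub (y (S (S t))) (y (S t))) = inner (gradf (y (S (S t)))) (vsub (y (S (S t))) (y (S t))) - inner (gradf (y (S t))) (vsub (y (S (S t))) (y (S t))) by rewrite inner_subl.
  have Lp := Hlip (y (S (S t))) (y (S t)).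
  have nb0 := vnorm_ge0 (vsub (gradf (y (S (S t)))) (gradf (y (S t)))).
  have na0 := vnorm_ge0 (vsub (y (S (S t))) (y (S t))).
  have Nb : vnorm (vsub (gradf (y (S (S t)))) (gradf (y (S t)))) ^ 2 <= L ^ 2 * vnorm (vsub (y (S (S t))) (y (S t))) ^ 2 by nra.
  have Bn := inner_ge0 (vsub (vsub (gradf (y (S (S t)))) (gradf (y (S t)))) (vscale L (vsub (y (S (S t))) (y (S t))))).
  rewrite inner_sub_scale -!vnorm_sq in Bn.
  have ba : inner (vsub (gradf (y (S (S t)))) (gradf (y (S t)))) (vsub (y (S (S t))) (y (S t))) <= L * vnorm (vsub (y (S (S t))) (y (S t))) ^ 2.
    apply: (Rmult_le_reg_l (2 * L)); nra.
  have gN : gamma * vnorm (vsub (gradf (y (S (S t)))) (gradf (y (S t)))) ^ 2 <= gamma * (L ^ 2 * vnorm (vsub (y (S (S t))) (y (S t))) ^ 2).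
    apply: Rmult_le_compat_l; lra.
  nra.
have hXd : vsub (x (S t)) (x t) = vscale 2 (vsub (z (S t)) (y (S t))).
  apply: functional_extensionality => i; have := f_equal (fun w => w i) HxB.
  rewrite /vscale /vsub /vadd /= => ->; ring.
split.
  rewrite hXd vnorm_scale Rabs_pos_eq; last lra.
  by rewrite vnorm_subC.
have hXd2 : vsub (x (S t)) (x t) = vadd (vscale gamma (vsub (gradf (y (S (S t)))) (gradf (y (S t))))) (vsub (y (S (S t))) (y (S t))).
  rewrite hG1 hG0.
  apply: functional_extensionality => i; have := f_equal (fun w => w i) HxB.
  rewrite /vscale /vsub /vadd /= => ->; field; apply: Rgt_not_eq; lra.
rewrite hXd2.
have nb0 := vnorm_ge0 (vsub (gradf (y (S (S t)))) (gradf (y (S t)))).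
have na0 := vnorm_ge0 (vsub (y (S (S t))) (y (S t))).
have w0 := vnorm_ge0 (vadd (vscale gamma (vsub (gradf (y (S (S t)))) (gradf (y (S t))))) (vsub (y (S (S t))) (y (S t)))).
have Wsq : vnorm (vadd (vscale gamma (vsub (gradf (y (S (S t)))) (gradf (y (S t))))) (vsub (y (S (S t))) (y (S t)))) ^ 2 = gamma ^ 2 * vnorm (vsub (gradf (y (S (S t)))) (gradf (y (S t)))) ^ 2 + 2 * gamma * inner (vsub (gradf (y (S (S t)))) (gradf (y (S t)))) (vsub (y (S (S t))) (y (S t))) + vnorm (vsub (y (S (S t))) (y (S t))) ^ 2.
  rewrite !vnorm_sq inner_norm_add !inner_scalel !inner_scaler; ring.
have Lp := Hlip (y (S (S t))) (y (S t)).
have Nb : vnorm (vsub (gradf (y (S (S t)))) (gradf (y (S t)))) ^ 2 <= L ^ 2 * vnorm (vsub (y (S (S t))) (y (S t))) ^ 2 by nra.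
have Bn := inner_ge0 (vsub (vsub (gradf (y (S (S t)))) (gradf (y (S t)))) (vscale L (vsub (y (S (S t))) (y (S t))))).
rewrite inner_sub_scale -!vnorm_sq in Bn.
have ba : inner (vsub (gradf (y (S (S t)))) (gradf (y (S t)))) (vsub (y (S (S t))) (y (S t))) <= L * vnorm (vsub (y (S (S t))) (y (S t))) ^ 2.
  apply: (Rmult_le_reg_l (2 * L)); nra.
have K : vnorm (vadd (vscale gamma (vsub (gradf (y (S (S t)))) (gradf (y (S t))))) (vsub (y (S (S t))) (y (S t)))) ^ 2 <= ((1 + gamma * L) * vnorm (vsub (y (S (S t))) (y (S t)))) ^ 2.
  rewrite Wsq.
  have : gamma ^ 2 * vnorm (vsub (gradf (y (S (S t)))) (gradf (y (S t)))) ^ 2 <= gamma ^ 2 * (L ^ 2 * vnorm (vsub (y (S (S t))) (y (S t))) ^ 2) by apply: Rmult_le_compat_l; nra.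
  have : 2 * gamma * inner (vsub (gradf (y (S (S t)))) (gradf (y (S t)))) (vsub (y (S (S t))) (y (S t))) <= 2 * gamma * (L * vnorm (vsub (y (S (S t))) (y (S t))) ^ 2) by apply: Rmult_le_compat_l; nra.
  nra.
have K0 : 0 <= (1 + gamma * L) * vnorm (vsub (y (S (S t))) (y (S t))) by nra.
nra.
Qed.
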